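(* Let $\mathbb{K}$ be a field, $k\ge 1$, and let $\mathcal{C}\subseteq\mathbb{K}^{2k}$ be an indecomposable self-dual code. Then $\dim_{\mathbb{K}}(\mathcal{C}^{(2)})=2k-1$.
   Context: A linear code of length $n$ over $\mathbb{K}$ is a $\mathbb{K}$-subspace $\mathcal{C}\subseteq\mathbb{K}^n$; it is self-dual if $\mathcal{C}=\mathcal{C}^\perp$ with respect to the standard bilinear form $\sum_i x_iy_i$. The Schur (componentwise) product of $v,w\in\mathbb{K}^n$ is $v\ast w=(v_1w_1,\dots,v_nw_n)$, and $\mathcal{C}^{(2)}$ is the $\mathbb{K}$-span of all $c\ast c'$, $c,c'\in\mathcal{C}$. Two codes are equivalent if one is obtained from the other by a permutation of coordinates. A code is decomposable if it is equivalent to a direct sum $\mathcal{C}_1\oplus\mathcal{C}_2=\{(c_1,c_2):c_i\in\mathcal{C}_i\}$ of two nontrivial (nonzero, positive-length) codes, and indecomposable otherwise. *)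

(* Defs.v *)
From HB Require Import structures.
From mathcomp Require Import all_boot all_order all_algebra all_fingroup.
Set Implicit Arguments. Unset Strict Implicit. Unset Printing Implicit Defensive.
Import GRing.Theory.
Local Open Scope ring_scope.

Definition dotv (K : fieldType) (n : nat) (x y : 'rV[K]_n) : K :=
  \sum_(i < n) x 0 i * y 0 i.

Definition self_dual (K : fieldType) (n : nat) (C : {vspace 'rV[K]_n}) : Prop :=
  forall v : 'rV[K]_n, v \in C <-> (forall c : 'rV[K]_n, c \in C -> dotv v c = 0).

Definition schur (K : fieldType) (n : nat) (v w : 'rV[K]_n) : 'rV[K]_n :=
  \row_i (v 0 i * w 0 i).

(* C^(2): the span of all c * c' with c, c' in C.  By bilinearity of the
   Schur product this is the span of the products of basis vectors. *)
Definition schur_square (K : fieldType) (n : nat) (C : {vspace 'rV[K]_n})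
  : {vspace 'rV[K]_n} :=
  <<[seq schur c c' | c <- vbasis C, c' <- vbasis C]>>%VS.

(* C is decomposable: after a permutation s of the coordinates, C is the direct
   sum C1 (+) C2 of two nonzero codes of positive lengths n1, n2 (n1 + n2 = n). *)
Definition perm_vec (K : fieldType) (n n1 n2 : nat) (e : (n1 + n2)%N = n)
  (s : 'S_n) (w : 'rV[K]_(n1 + n2)) : 'rV[K]_n :=
  \row_i w 0 (cast_ord (esym e) (s i)).

Definition decomposable (K : fieldType) (n : nat) (C : {vspace 'rV[K]_n}) : Prop :=
  exists n1 n2 : nat, exists e : (n1 + n2)%N = n, exists s : 'S_n,
  exists C1 : {vspace 'rV[K]_n1}, exists C2 : {vspace 'rV[K]_n2},
    [/\ (0 < n1)%N, (0 < n2)%N, C1 != 0%VS, C2 != 0%VS &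
     forall w : 'rV[K]_(n1 + n2),
       perm_vec e s w \in C <-> (lsubmx w \in C1 /\ rsubmx w \in C2)].

Definition indecomposable (K : fieldType) (n : nat) (C : {vspace 'rV[K]_n}) : Prop :=
  ~ decomposable C.

(* Main.v *)
Require Import Defs.
From HB Require Import structures.
From mathcomp Require Import all_boot all_order all_algebra all_fingroup.
From mathcomp Require Import ring zify.
From Stdlib Require Import Classical.
Set Implicit Arguments. Unset Strict Implicit. Unset Printing Implicit Defensive.
Import GRing.Theory.
Local Open Scope ring_scope.

Lemma schurC (K : fieldType) n (x y : 'rV[K]_n) : schur x y = schur y x.
Proof. by apply/rowP=> i; rewrite !mxE mulrC. Qed.

Lemma schur_sumr (K : fieldType) n (x : 'rV[K]_n) (I : Type) (r : seq I) (P : pred I) F :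
  schur x (\sum_(i <- r | P i) F i) = \sum_(i <- r | P i) schur x (F i).
Proof.
apply/rowP=> j; rewrite mxE summxE summxE mulr_sumr; apply: eq_bigr => i _; by rewrite !mxE.
Qed.

Lemma schurZr (K : fieldType) n (x y : 'rV[K]_n) a : schur x (a *: y) = a *: schur x y.
Proof. by apply/rowP=> i; rewrite !mxE mulrCA. Qed.

Lemma dotv_sumr (K : fieldType) n (x : 'rV[K]_n) (I : Type) (r : seq I) (P : pred I) F :
  dotv x (\sum_(i <- r | P i) F i) = \sum_(i <- r | P i) dotv x (F i).
Proof.
rewrite /dotv. under eq_bigr => j _ do rewrite summxE mulr_sumr.
by rewrite exchange_big.
Qed.

Lemma dotvZr (K : fieldType) n (x y : 'rV[K]_n) a : dotv x (a *: y) = a * dotv x y.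
Proof. rewrite /dotv mulr_sumr; apply: eq_bigr => i _; rewrite mxE; ring. Qed.

Lemma dotv_schur (K : fieldType) n (v c d : 'rV[K]_n) :
  dotv (schur v c) d = dotv v (schur c d).
Proof. rewrite /dotv; apply: eq_bigr => i _; rewrite !mxE; ring. Qed.

Lemma schur_mem (K : fieldType) n (C : {vspace 'rV[K]_n}) c d :
  c \in C -> d \in C -> schur c d \in schur_square C.
Proof.
move=> Hc Hd; rewrite (coord_vbasis Hc) [schur _ d]schurC schur_sumr.
apply: memv_suml => i _; rewrite schurZr; apply: memvZ.
rewrite (coord_vbasis Hd) [schur _ (vbasis C)`_i]schurC schur_sumr.
apply: memv_suml => j _; rewrite schurZr.
apply: memvZ; apply: memv_span; apply: allpairs_f; apply: mem_nth;
  by rewrite size_tuple.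
Qed.

Lemma dotv_span (K : fieldType) n (C : {vspace 'rV[K]_n}) v :
  (forall j : 'I_(\dim C), dotv v (vbasis C)`_j = 0) -> forall c, c \in C -> dotv v c = 0.
Proof.
move=> H c Hc; rewrite (coord_vbasis Hc) dotv_sumr big1 // => j _.
by rewrite dotvZr H mulr0.
Qed.

Definition stab (K : fieldType) n (C : {vspace 'rV[K]_n}) (v : 'rV[K]_n) :=
  forall c, c \in C -> schur v c \in C.

Lemma stab_prod (K : fieldType) n (C : {vspace 'rV[K]_n}) (I : Type) (r : seq I)
  (P : pred I) (F : I -> 'I_n -> K) :
  (forall m, P m -> stab C (\row_l F m l)) -> stab C (\row_l \prod_(m <- r | P m) F m l).
Proof.
move=> HF; elim: r => [|x r IH] c Hc.
  have -> : schur (\row_l \prod_(m <- [::] | P m) F m l) c = c.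
    by apply/rowP=> i; rewrite !mxE big_nil mul1r.
  done.
case Px: (P x).
  have -> : schur (\row_l \prod_(m <- x :: r | P m) F m l) c =
     schur (\row_l F x l) (schur (\row_l \prod_(m <- r | P m) F m l) c).
    by apply/rowP=> i; rewrite !mxE big_cons Px mulrA.
  by apply: HF => //; apply: IH.
have -> : schur (\row_l \prod_(m <- x :: r | P m) F m l) c =
     schur (\row_l \prod_(m <- r | P m) F m l) c.
  by apply/rowP=> i; rewrite !mxE big_cons Px.
exact: IH.
Qed.

Lemma stab_factor (K : fieldType) n (C : {vspace 'rV[K]_n}) v a b :
  stab C v -> stab C (\row_l ((v 0 l - b) / (a - b))).
Proof.
move=> Hv c Hc.
have -> : schur (\row_l ((v 0 l - b) / (a - b))) c =
   (a - b)^-1 *: schur v c - ((a - b)^-1 * b) *: c.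
  apply/rowP=> i; rewrite !mxE; ring.
by apply: memvB; apply: memvZ => //; apply: Hv.
Qed.

Lemma dotv_delta (K : fieldType) n (i : 'I_n) (c : 'rV[K]_n) :
  dotv (delta_mx 0 i) c = c 0 i.
Proof.
rewrite /dotv (bigD1 i) //= !mxE !eqxx mul1r big1 ?addr0 // => j /negbTE Hj.
by rewrite mxE Hj andbF mul0r.
Qed.

Lemma self_dual_support (K : fieldType) n (C : {vspace 'rV[K]_n}) (i : 'I_n) :
  self_dual C -> exists2 c, c \in C & c 0 i != 0.
Proof.
move=> SD; case: (classic (exists2 c, c \in C & c 0 i != 0)) => // H; exfalso.
have Hu : delta_mx 0 i \in C.
  apply/SD => c Hc; rewrite dotv_delta.
  by apply/eqP/negP => /negP Hn; apply: H; exists c.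
by apply: H; exists (delta_mx 0 i) => //; rewrite mxE !eqxx oner_eq0.
Qed.

Lemma perm_split n (A : {set 'I_n}) : exists s : 'S_n, forall i, (s i < #|A|)%N = (i \in A).
Proof.
set L := enum A ++ enum (~: A).
have HL : forall i : 'I_n, (index i L < n)%N.
  move=> i; have E : size L = n by rewrite size_cat -!cardE cardsC card_ord.
  by rewrite -[X in (_ < X)%N]E index_mem mem_cat !mem_enum in_setC orbN.
have inj : injective (fun i => Ordinal (HL i)).
  move=> i j [] Eij.
  have Li : i \in L by rewrite mem_cat !mem_enum in_setC orbN.
  have Lj : j \in L by rewrite mem_cat !mem_enum in_setC orbN.
  by rewrite -(nth_index i Li) Eij nth_index.
exists (perm inj) => i; rewrite permE /= index_cat mem_enum.
case: ifP => Hi.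
  by rewrite cardE index_mem mem_enum Hi.
by rewrite cardE ltnNge leq_addr.
Qed.

Lemma decomp (K : fieldType) n (C : {vspace 'rV[K]_n}) (A : {set 'I_n}) i0 i1 :
  self_dual C -> i0 \in A -> i1 \notin A ->
  stab C (\row_l (l \in A)%:R) -> decomposable C.
Proof.
move=> SD Hi0 Hi1 HE.
have e : (#|A| + #|~:A| = n)%N by rewrite cardsC card_ord.
have [s Hs] := perm_split A.
pose g1 := fun j : 'I_#|A| => (s^-1)%g (cast_ord e (lshift #|~:A| j)).
pose g2 := fun j : 'I_#|~:A| => (s^-1)%g (cast_ord e (rshift #|A| j)).
have key : forall i, (exists2 j, g1 j = i & cast_ord (esym e) (s i) = lshift _ j /\ i \in A)
   \/ (exists2 j, g2 j = i & cast_ord (esym e) (s i) = rshift _ j /\ i \notin A).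
  move=> i; case: (splitP (cast_ord (esym e) (s i))) => j Ej; [left|right]; exists j.
  - rewrite /g1; have -> : cast_ord e (lshift _ j) = s i by apply: val_inj; rewrite /= -Ej.
    by rewrite permK.
  - split; first by apply: val_inj; exact: Ej.
    by rewrite -Hs; move: Ej => /= ->; rewrite ltn_ord.
  - rewrite /g2; have -> : cast_ord e (rshift _ j) = s i by apply: val_inj; rewrite /= -Ej.
    by rewrite permK.
  - split; first by apply: val_inj; exact: Ej.
    by rewrite -Hs; move: Ej => /= ->; rewrite ltnNge leq_addr.
pose C1 := (linfun (mxsub id g1 : 'rV[K]_n -> 'rV[K]_#|A|) @: C)%VS.
pose C2 := (linfun (mxsub id g2 : 'rV[K]_n -> 'rV[K]_#|~:A|) @: C)%VS.
exists #|A|, #|~:A|, e, s, C1, C2; split.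
- by apply/card_gt0P; exists i0.
- by apply/card_gt0P; exists i1; rewrite in_setC.
- have [c Hc Hci] := self_dual_support i0 SD.
  case: (key i0) => [[j Hj _]|[j _ [_ /negP]]] //.
  apply/eqP => E0.
  have := memv_img (linfun (mxsub id g1 : 'rV[K]_n -> 'rV[K]_#|A|)) Hc.
  rewrite -/C1 E0 memv0 lfunE => /eqP /rowP /(_ j); rewrite !mxE Hj => Hz.
  by rewrite Hz eqxx in Hci.
- have [c Hc Hci] := self_dual_support i1 SD.
  case: (key i1) => [[j _ [_ Hin]]|[j Hj _]]; first by rewrite Hin in Hi1.
  apply/eqP => E0.
  have := memv_img (linfun (mxsub id g2 : 'rV[K]_n -> 'rV[K]_#|~:A|)) Hc.
  rewrite -/C2 E0 memv0 lfunE => /eqP /rowP /(_ j); rewrite !mxE Hj => Hz.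
  by rewrite Hz eqxx in Hci.
move=> w; split.
  move=> Hw; split.
    have -> : lsubmx w = linfun (mxsub id g1 : 'rV[K]_n -> 'rV[K]_#|A|) (perm_vec e s w).
      by rewrite lfunE; apply/rowP=> j; rewrite !mxE /g1 permKV cast_ordK.
    exact: memv_img.
  have -> : rsubmx w = linfun (mxsub id g2 : 'rV[K]_n -> 'rV[K]_#|~:A|) (perm_vec e s w).
    by rewrite lfunE; apply/rowP=> j; rewrite !mxE /g2 permKV cast_ordK.
  exact: memv_img.
case=> /memv_imgP [c1 Hc1 E1] /memv_imgP [c2 Hc2 E2].
rewrite lfunE in E1; rewrite lfunE in E2.
have -> : perm_vec e s w = schur (\row_l (l \in A)%:R) c1
    + (c2 - schur (\row_l (l \in A)%:R) c2).
  apply/rowP=> i; rewrite !mxE.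
  case: (key i) => [[j Hj [-> HiA]]|[j Hj [-> HiA]]].
    move: (E1) => /rowP /(_ j); rewrite !mxE Hj => ->.
    by rewrite HiA !mul1r subrr addr0.
  move: (E2) => /rowP /(_ j); rewrite !mxE Hj => ->.
  by rewrite (negbTE HiA) !mul0r subr0 add0r.
by apply: memvD; [apply: HE | apply: memvB => //; apply: HE].
Qed.

Lemma stab_const (K : fieldType) n (C : {vspace 'rV[K]_n}) v :
  self_dual C -> indecomposable C -> stab C v -> forall i j, v 0 i = v 0 j.
Proof.
move=> SD ID Hv i j; apply/eqP; apply/negPn/negP => Hij.
pose a := v 0 i.
pose A := [set l | v 0 l == a].
have HE : stab C (\row_l (l \in A)%:R).
  have -> : \row_l (l \in A)%:R = \row_l \prod_(m <- index_enum 'I_n | v 0 m != a)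
       ((v 0 l - v 0 m) / (a - v 0 m)) :> 'rV[K]_n.
    apply/rowP => l; rewrite !mxE inE; case: eqP => Hl.
      rewrite big1 // => m Hm; rewrite Hl divff // subr_eq0 eq_sym //.
    rewrite (bigD1 l) /=; last by apply/eqP.
    by rewrite subrr !mul0r.
  apply: stab_prod => m _; exact: stab_factor.
apply: ID; apply: (decomp (i0:=i) (i1:=j) SD _ _ HE); by rewrite inE ?eqxx // eq_sym.
Qed.

Lemma main_gen (K : fieldType) n (C : {vspace 'rV[K]_n}) :
  (0 < n)%N -> self_dual C -> indecomposable C -> \dim (schur_square C) = n.-1.
Proof.
move=> n0 SD ID.
have dimf : forall d, \dim (fullv : {vspace 'rV[K]_d}) = d.
  by move=> d; rewrite dimvf /dim /= mul1n.
pose psi := linfun (mulmxr (const_mx 1 : 'M[K]_(n, 1)) : 'rV[K]_n -> 'rV[K]_1).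
have Sker : (schur_square C <= lker psi)%VS.
  apply/span_subvP => x /allpairsP [[b b'] [Hb Hb' ->]] /=.
  rewrite memv_ker lfunE /=; apply/eqP/rowP => j; rewrite !mxE.
  rewrite -[RHS]((SD b).1 (vbasis_mem Hb) b' (vbasis_mem Hb')).
  by apply: eq_bigr => l _; rewrite !mxE mulr1.
have psi_nz : (0 < \dim (psi @: fullv))%N.
  rewrite lt0n dimv_eq0; apply/eqP => E0.
  have := memv_img psi (memvf (delta_mx 0 (Ordinal n0) : 'rV[K]_n)).
  rewrite E0 memv0 lfunE /= => /eqP /rowP /(_ 0); rewrite !mxE.
  rewrite (bigD1 (Ordinal n0)) //= big1 ?addr0; last first.
    by move=> l /negbTE Hl; rewrite !mxE Hl andbF mul0r.
  by rewrite !mxE !eqxx mulr1; apply/eqP; exact: oner_neq0.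
have up : (\dim (schur_square C) <= n.-1)%N.
  have := limg_ker_dim psi fullv; rewrite capfv dimf => E.
  apply: leq_trans (dimvS Sker) _; rewrite -[X in (_ <= X.-1)%N]E -subn1 -addnBA // leq_addr //.
set S := schur_square C.
pose d := \dim S.
pose M := \matrix_(i < n, j < d) (vbasis S)`_j 0 i.
pose phi := linfun (mulmxr M : 'rV[K]_n -> 'rV[K]_d).
have kerS : (lker phi <= <[const_mx 1 : 'rV[K]_n]>)%VS.
  apply/subvP => v; rewrite memv_ker lfunE /= => /eqP Hv.
  have Hperp : forall x, x \in S -> dotv v x = 0.
    apply: dotv_span => j; move/rowP: Hv => /(_ j); rewrite !mxE => <-.
    by apply: eq_bigr => l _; rewrite !mxE.
  have Hst : stab C v.
    move=> c Hc; apply/SD => c' Hc'; rewrite dotv_schur; apply: Hperp.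
    exact: schur_mem.
  have Hc := stab_const SD ID Hst.
  have -> : v = v 0 (Ordinal n0) *: const_mx 1.
    by apply/rowP => i; rewrite !mxE mulr1 (Hc i (Ordinal n0)).
  by apply: memvZ; apply: memv_line.
have lo : (n.-1 <= d)%N.
  have := limg_ker_dim phi fullv; rewrite capfv dimf => E.
  have h1 : (\dim (lker phi) <= 1)%N.
    by apply: leq_trans (dimvS kerS) _; rewrite dim_vline leq_b1.
  have h2 : (\dim (limg phi) <= d)%N.
    by rewrite -[X in (_ <= X)%N](dimf d); apply: dimvS; apply: subvf.
  rewrite -[X in (X.-1 <= _)%N]E -subn1.
  move: h1 h2; move: (\dim (lker phi)) (\dim (limg phi)) => x y; lia.
by apply/eqP; rewrite eqn_leq up lo.
Qed.

Unset Implicit Arguments.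
Theorem mainTheorem2 (K : fieldType) (k : nat) (C : {vspace 'rV[K]_(2 * k)}) :
  (1 <= k)%N -> self_dual C -> indecomposable C ->
  \dim (schur_square C) = (2 * k - 1)%N.
Proof.
move=> k1 SD ID; rewrite subn1; apply: main_gen => //.
by rewrite muln_gt0.
Qed.
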